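(* Let $P=\langle(\mathcal Q,\le),N\rangle$ be a possibilistic disjunctive logic program and let $\alpha\in\mathcal Q$ be fixed. If $n(r)=\alpha$ for every $r\in N$ and $M'$ is an answer set of $P^*$, then $M:=\{(a,\alpha):a\in M'\}$ is a possibilistic answer set of $P$.
   Context: $(\mathcal Q,\le)$ is a finite lattice with top $\top_{\mathcal Q}$. A possibilistic disjunctive logic program is $P=\langle(\mathcal Q,\le),N\rangle$ with $N$ a finite set of possibilistic clauses $r=\beta:\mathcal A\leftarrow\mathcal B^+,not\ \mathcal B^-$ ($\beta\in\mathcal Q$; strongly negated atoms treated as fresh atoms) and constraints $\top_{\mathcal Q}:\ \leftarrow\mathcal B^+,not\ \mathcal B^-$. $n(r)=\beta$, $r^*$ the underlying clause, $P^*=\{r^*:r\in N\}$; answer sets of $P^*$ are Gelfond–Lifschitz answer sets (minimal models of the reduct), complementary atoms allowed. $\mathcal{PS}$: sets of pairs (atom, element of $\mathcal Q$) with each atom at most once; $M^*$ its set of atoms; $A\sqsubseteq B$ iff $A^*\subseteq B^*$ and $\gamma\le\delta$ whenever $(x,\gamma)\in A,(x,\delta)\in B$. Reduct $P_M=\{n(r):(\mathcal A\cap M)\leftarrow\mathcal B^+\mid r\in N,\mathcal A\cap M\ne\emptyset,\mathcal B^-\cap M=\emptyset,\mathcal B^+\subseteq M\}$. $\vdash_{PL}$ is necessity-valued possibilistic-logic inference (clauses read as weighted implications; classical axioms weighted $\top_{\mathcal Q}$; rules $(\varphi\ \gamma),(\varphi\to\psi\ \delta)\vdash(\psi\ \mathrm{GLB}\{\gamma,\delta\})$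 and $(\varphi\ \gamma),(\varphi\ \delta)\vdash(\varphi\ \epsilon)$ for $\epsilon\le\mathrm{GLB}\{\gamma,\delta\}$). $P\Vvdash_{PL}M$ iff $M^*$ is an answer set of $P^*$ and $P_{M^*}\vdash_{PL}(a\ \gamma)$ for all $(a,\gamma)\in M$. $M$ is a possibilistic answer set of $P$ iff $M^*$ is an answer set of $P^*$, $P\Vvdash_{PL}M$, and there is no $M''\in\mathcal{PS}$, $M''\ne M$, with $M\sqsubseteq M''$ and $P\Vvdash_{PL}M''$. *)

(* Defs.v *)
From Stdlib Require List.
From HB Require Import structures.
From mathcomp Require Import all_boot all_order.
Set Implicit Arguments. Unset Strict Implicit. Unset Printing Implicit Defensive.
Import Order.Theory.
Local Open Scope order_scope.

Section Defs.
Variable T : finType.   (* atoms (strongly negated atoms are just further atoms) *)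

Record clause := Clause { head : {set T}; pos : {set T}; neg : {set T} }.

(* constraint  <- B+, not B-   (first component B+, second B-) *)
Definition constr := ({set T} * {set T})%type.

Record dprog := DProg { drules : seq clause; dconstrs : seq constr }.

(* X is a model of the Gelfond-Lifschitz reduct P^M *)
Definition reduct_model (P : dprog) (M X : {set T}) : Prop :=
  (forall r, List.In r (drules P) -> [disjoint neg r & M] ->
       pos r \subset X -> head r :&: X != set0) /\
  (forall c, List.In c (dconstrs P) -> [disjoint c.2 & M] -> ~~ (c.1 \subset X)).

Definition answer_set (P : dprog) (M : {set T}) : Prop :=
  reduct_model P M M /\
  forall X : {set T}, X \subset M -> reduct_model P M X -> X = M.

Inductive formula :=
| Fvar of T | Ftop | Fbot | Fneg of formula
| Fand of formula & formula | For of formula & formula | Fimp of formula & formula.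

Fixpoint feval (v : T -> bool) (f : formula) : bool :=
  match f with
  | Fvar a => v a | Ftop => true | Fbot => false
  | Fneg g => ~~ feval v g
  | Fand g h => feval v g && feval v h
  | For g h => feval v g || feval v h
  | Fimp g h => feval v g ==> feval v h
  end.

Definition tautology (f : formula) : Prop := forall v, feval v f.

Definition bigAnd (s : seq T) : formula := foldr (fun a f => Fand (Fvar a) f) Ftop s.
Definition bigOr (s : seq T) : formula := foldr (fun a f => For (Fvar a) f) Fbot s.

Definition clause_formula (A B : {set T}) : formula :=
  Fimp (bigAnd (enum B)) (bigOr (enum A)).

Section Possibilistic.
Variables (d : Order.disp_t) (Q : finTBLatticeType d).

Record pprog := PProg { prules : seq (Q * clause); pconstrs : seq constr }.

Definition n (r : Q * clause) : Q := r.1.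

Definition star (P : pprog) : dprog := DProg [seq r.2 | r <- prules P] (pconstrs P).

Inductive pl_derives (G : seq (formula * Q)) : formula -> Q -> Prop :=
| pl_hyp phi g : List.In (phi, g) G -> pl_derives G phi g
| pl_ax phi : tautology phi -> pl_derives G phi \top
| pl_mp phi psi g e : pl_derives G phi g -> pl_derives G (Fimp phi psi) e ->
    pl_derives G psi (Order.meet g e)
| pl_weak phi g e eps : pl_derives G phi g -> pl_derives G phi e ->
    eps <= Order.meet g e -> pl_derives G phi eps.

Definition preduct (P : pprog) (M : {set T}) : seq (formula * Q) :=
  [seq (clause_formula (head r.2 :&: M) (pos r.2), n r)
  | r <- prules P & [&& head r.2 :&: M != set0, [disjoint neg r.2 & M]
                      & pos r.2 \subset M]].

(* possibilistic atom sets PS: each atom occurs at most once, i.e. a partial map *)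
Definition pset := {ffun T -> option Q}.

Definition pstar (M : pset) : {set T} := [set x | M x != None].

Definition psub (A B : pset) : Prop :=
  pstar A \subset pstar B /\
  forall x g e, A x = Some g -> B x = Some e -> g <= e.

Definition pl_entails (P : pprog) (M : pset) : Prop :=
  answer_set (star P) (pstar M) /\
  forall a g, M a = Some g -> pl_derives (preduct P (pstar M)) (Fvar a) g.

Definition poss_answer_set (P : pprog) (M : pset) : Prop :=
  answer_set (star P) (pstar M) /\ pl_entails P M /\
  ~ (exists M'' : pset, M'' <> M /\ psub M M'' /\ pl_entails P M'').

End Possibilistic.
End Defs.

(* Main.v *)
Require Import Defs.
From Stdlib Require List.
From HB Require Import structures.
From mathcomp Require Import all_boot all_order.
Import Order.Theory.
Local Open Scope order_scope.
Set Implicit Arguments. Unset Strict Implicit.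

Section Aux.
Variable T : finType.

Lemma in_mapfilter (A B : Type) (f : A -> B) (p : pred A) (s : seq A) y :
  List.In y [seq f r | r <- s & p r] -> exists r, List.In r s /\ p r /\ y = f r.
Proof.
elim: s => [|x s IH] //=.
case px: (p x) => /=.
- case=> [<-|/IH [r [H1 [H2 H3]]]]; first by exists x; auto.
  by exists r; auto.
- by move/IH => [r [H1 [H2 H3]]]; exists r; auto.
Qed.

Lemma mapfilter_in (A B : Type) (f : A -> B) (p : pred A) (s : seq A) r :
  List.In r s -> p r -> List.In (f r) [seq f r | r <- s & p r].
Proof.
elim: s => [|x s IH] //= [<- ->|Hr pr]; first by left.
by case: (p x) => /=; [right|]; apply: IH.
Qed.

Lemma in_map' (A B : Type) (f : A -> B) (s : seq A) y :
  List.In y (map f s) -> exists r, List.In r s /\ y = f r.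
Proof.
elim: s => [|x s IH] //= [<-|/IH [r [H1 H2]]]; first by exists x; auto.
by exists r; auto.
Qed.

Lemma feval_bigAnd v (s : seq T) : feval v (bigAnd s) = all v s.
Proof. by elim: s => //= x s ->. Qed.

Lemma feval_bigOr v (s : seq T) : feval v (bigOr s) = has v s.
Proof. by elim: s => //= x s ->. Qed.

Definition curry {Q : Type} (L : seq (formula T * Q)) phi :=
  foldr (fun h f => Fimp h.1 f) phi L.

Lemma feval_curry {Q : Type} v (L : seq (formula T * Q)) phi :
  ((forall h, List.In h L -> feval v h.1) -> feval v phi) -> feval v (curry L phi).
Proof.
elim: L => [|h L IH] /= H; first by apply: H.
case E: (feval v h.1) => //=; apply: IH => HL; apply: H => h' [<-|]; auto.
Qed.

Variables (d : Order.disp_t) (Q : finTBLatticeType d).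

Lemma deriv_curry (G : seq (formula T * Q)) alpha :
  (forall h, List.In h G -> h.2 = alpha) ->
  forall L, (forall h, List.In h L -> List.In h G) ->
  forall phi g, alpha <= g -> pl_derives G (curry L phi) g ->
  exists g', alpha <= g' /\ pl_derives G phi g'.
Proof.
move=> HG; elim=> [|[f w] L IH] HL phi g ag Hd /=; first by exists g.
have Hin : List.In (f, w) G by apply: HL; left.
have wa : w = alpha by apply: (HG _ Hin).
have Hf : pl_derives G f w by apply: pl_hyp.
have := pl_mp Hf Hd => Hd'.
apply: (IH _ phi _ _ Hd'); first by move=> h Hh; apply: HL; right.
by rewrite lexI wa lexx ag.
Qed.

Lemma soundness (G : seq (formula T * Q)) alpha :
  (forall h, List.In h G -> h.2 = alpha) ->
  forall phi g, pl_derives G phi g -> g <= alpha \/ tautology phi.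
Proof.
move=> HG phi g; elim=> {phi g}.
- by move=> phi g /HG /= ->; left.
- by move=> phi Ht; right.
- move=> phi psi g e _ [H1|H1] _ [H2|H2].
  + by left; apply: leIxl.
  + by left; apply: leIxl.
  + by left; apply: leIxr.
  + by right => v; have := H2 v; rewrite /= H1.
- move=> phi g e eps _ [H1|H1] _ _ Heps; last by right.
  by left; apply: le_trans Heps _; apply: leIxl.
Qed.

Lemma answer_set_min (D : dprog T) A B :
  answer_set D A -> answer_set D B -> A \subset B -> A = B.
Proof.
move=> [[HAr HAc] _] [_ HBm] AB; apply: HBm => //; split.
- by move=> r Hr Hd; apply: HAr => //; apply: disjointWr Hd.
- by move=> c Hc Hd; apply: HAc => //; apply: disjointWr Hd.
Qed.

End Aux.

Theorem proposition4 (T : finType) (d : Order.disp_t) (Q : finTBLatticeType d)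
    (P : pprog T Q) (alpha : Q) (M' : {set T}) :
  (forall r, List.In r (prules P) -> n r = alpha) ->
  answer_set (star P) M' ->
  poss_answer_set P [ffun a => if a \in M' then Some alpha else None].
Proof.
move=> Hn HA.
set M := [ffun a => _].
have PM : pstar M = M'.
  by apply/setP=> a; rewrite inE ffunE; case: (a \in M').
have HG : forall h, List.In h (preduct P M') -> h.2 = alpha.
  move=> h; rewrite /preduct => Hh; have [r [Hr [_ ->]]] := in_mapfilter Hh; exact: Hn.
have Hent : pl_entails P M.
  split; first by rewrite PM.
  move=> a g; rewrite PM ffunE; case aM: (a \in M') => //; case=> <-.
  have Hd : pl_derives (preduct P M') (curry (preduct P M') (Fvar a)) \top.
    apply: pl_ax => v; apply: feval_curry => Hv /=.
    set X := [set x in M' | v x].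
    have XM : X \subset M' by apply/subsetP=> x; rewrite inE => /andP [].
    case: HA => [[HMr HMc] HMm].
    have HX : reduct_model (star P) M' X.
      split.
      - move=> r Hr0 Hdis Hpos; have [pr [Hpr Er]] := in_map' Hr0; subst r.
        have posM : pos pr.2 \subset M' by apply: subset_trans Hpos XM.
        have Hh := HMr pr.2 Hr0 Hdis posM.
        have Hin := @mapfilter_in _ _
          (fun r => (clause_formula (Defs.head r.2 :&: M') (pos r.2), n r))
          (fun r => [&& Defs.head r.2 :&: M' != set0, [disjoint neg r.2 & M']
                      & pos r.2 \subset M']) _ _ Hpr.
        rewrite Hh Hdis posM in Hin.
        have := Hv _ (Hin isT); rewrite /= feval_bigAnd feval_bigOr.
        have -> : all v (enum (pos pr.2)).
          apply/allP => x; rewrite mem_enum => /(subsetP Hpos).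
          by rewrite inE => /andP [].
        move=> /= /hasP [x]; rewrite mem_enum inE => /andP [xh xM] vx.
        by apply/set0Pn; exists x; rewrite !inE xh xM vx.
      - move=> c Hc Hdis; apply/negP => Hsub; have := HMc c Hc Hdis.
        by rewrite (subset_trans Hsub XM).
    have EX := HMm X XM HX.
    have : a \in X by rewrite EX.
    by rewrite inE => /andP [].
  have [g' [ag' Hg']] := deriv_curry HG (fun h H => H) (lex1 alpha) Hd.
  apply: (pl_weak Hg' Hg'); by rewrite meetxx.
split; first by rewrite PM; case: HA.
split=> //.
move=> [M'' [Hne [[Hsub Hle] [HA'' HD'']]]].
apply: Hne.
rewrite PM in Hsub.
have E := answer_set_min HA HA'' Hsub.
apply/ffunP=> x; rewrite ffunE.
case xM: (x \in M').
- have : x \in pstar M'' by rewrite -E.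
  rewrite inE; case Hx: (M'' x) => [e|] // _.
  have ae : alpha <= e by apply: (Hle x); rewrite // ffunE xM.
  rewrite E in HG.
  have [ea|Ht] := soundness HG (HD'' x e Hx).
  + by congr Some; apply/eqP; rewrite eq_le ae ea.
  + by have := Ht (fun _ => false).
- have : x \notin pstar M'' by rewrite -E xM.
  by rewrite inE negbK => /eqP ->.
Qed.
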